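(* For a monoid $S$ and $n\in\mathbb N$ the following are equivalent: (i) $S$ is cancellative and right $n$-nilpotent; (ii) $S$ is both left $n$-nilpotent and right $n$-nilpotent; (iii) $S$ embeds into an $n$-nilpotent group.
   Context: A monoid is regarded as the semigroup $(S,\cdot)$ for the purposes of commutators. For an algebra $\mathbf A$, $k\ge1$ and congruences $\alpha_1,\dots,\alpha_k$, $M_{\mathbf A}(\alpha_1,\dots,\alpha_k)$ is the subalgebra of $\mathbf A^{\{0,1\}^k}$ generated by all $g$ such that for some $i$ and $(a,b)\in\alpha_i$, $g(x)=a$ if $x_i=0$ and $g(x)=b$ if $x_i=1$; $[\alpha_1,\dots,\alpha_k]$ is the smallest congruence $\delta$ such that for all $f\in M_{\mathbf A}(\alpha_1,\dots,\alpha_k)$: if $(f(x0),f(x1))\in\delta$ for all $x\in\{0,1\}^{k-1}\setminus\{(1,\dots,1)\}$, then $(f(1,\dots,1,0),f(1,\dots,1,1))\in\delta$. With $1$ total, $0$ trivial congruence: $(1]^1=1$, $(1]^{j+1}=[1,(1]^j]$; $[1)^1=1$, $[1)^{j+1}=[[1)^j,1]$. $\mathbf A$ is left $n$-nilpotent if $(1]^{n+1}=0$, right $n$-nilpotent if $[1)^{n+1}=0$. An $n$-nilpotent group is a group of nilpotency class at most $n$ (classical sense). *)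

(* Defs.v *)
From HB Require Import structures.
From mathcomp Require Import all_boot.

Set Implicit Arguments.
Unset Strict Implicit.
Unset Printing Implicit Defensive.

Local Open Scope group_scope.

Section Commutator.
Variable S : magmaType.

Definition congruence (R : S -> S -> Prop) : Prop :=
  [/\ (forall x, R x x),
      (forall x y, R x y -> R y x),
      (forall x y z, R x y -> R y z -> R x z) &
      (forall a b c d, R a b -> R c d -> R (a * c) (b * d))].

Definition total_cong : S -> S -> Prop := fun _ _ => True.

(* elements of S^{{0,1}^2}: the value f(x1,x2) is the field f_x1x2 *)
Record sq := Sq { f00 : S; f01 : S; f10 : S; f11 : S }.

Definition sq_mul (f g : sq) : sq :=
  Sq (f00 f * f00 g) (f01 f * f01 g) (f10 f * f10 g) (f11 f * f11 g).

(* M_S(alpha, beta): the subalgebra of S^{{0,1}^2} generated by the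
   alpha-generators (depending on x1) and the beta-generators (on x2) *)
Inductive M2 (alpha beta : S -> S -> Prop) : sq -> Prop :=
| M2_gen1 a b : alpha a b -> M2 alpha beta (Sq a a b b)
| M2_gen2 a b : beta a b -> M2 alpha beta (Sq a b a b)
| M2_mul f g : M2 alpha beta f -> M2 alpha beta g -> M2 alpha beta (sq_mul f g).

Definition term_cond (alpha beta delta : S -> S -> Prop) : Prop :=
  forall f, M2 alpha beta f -> delta (f00 f) (f01 f) -> delta (f10 f) (f11 f).

Definition comm (alpha beta : S -> S -> Prop) : S -> S -> Prop :=
  fun x y => forall delta, congruence delta -> term_cond alpha beta delta -> delta x y.

(* lser j = (1]^(j+1),  rser j = [1)^(j+1) *)
Fixpoint lser (j : nat) : S -> S -> Prop :=
  match j with 0 => total_cong | j'.+1 => comm total_cong (lser j') end.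
Fixpoint rser (j : nat) : S -> S -> Prop :=
  match j with 0 => total_cong | j'.+1 => comm (rser j') total_cong end.

Definition left_nilpotent (n : nat) : Prop := forall x y, lser n x y <-> x = y.
Definition right_nilpotent (n : nat) : Prop := forall x y, rser n x y <-> x = y.

End Commutator.

Definition cancellative (S : monoidType) : Prop :=
  (forall a b c : S, a * b = a * c -> b = c) /\
  (forall a b c : S, b * a = c * a -> b = c).

Section GroupNil.
Variable G : groupType.

Inductive gen_subgroup (A : G -> Prop) : G -> Prop :=
| gs_base x : A x -> gen_subgroup A x
| gs_one : gen_subgroup A 1
| gs_mul x y : gen_subgroup A x -> gen_subgroup A y -> gen_subgroup A (x * y)
| gs_inv x : gen_subgroup A x -> gen_subgroup A x^-1.

(* lower central series: lcs j = gamma_(j+1); gamma_1 = G,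
   gamma_(j+1) = [gamma_j, G] *)
Fixpoint lcs (j : nat) : G -> Prop :=
  match j with
  | 0 => fun _ => True
  | j'.+1 => gen_subgroup (fun z => exists x y, lcs j' x /\ z = [~ x, y])
  end.

Definition nilpotent_class_le (n : nat) : Prop := forall x, lcs n x -> x = 1.

End GroupNil.

Definition embeds_in_nilpotent_group (S : monoidType) (n : nat) : Prop :=
  exists (G : groupType) (phi : S -> G),
    [/\ injective phi, (forall x y, phi (x * y) = phi x * phi y), phi 1 = 1
      & nilpotent_class_le G n].

(* Main.v *)
From HB Require Import structures.
Require Import Defs.
From mathcomp Require Import all_boot.
From Stdlib Require Import ClassicalEpsilon FunctionalExtensionality PropExtensionality.
Set Implicit Arguments. Unset Strict Implicit.
Local Open Scope group_scope.

Lemma lser_refl (S : monoidType) j (x : S) : lser j x x.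
Proof. case: j => [|j] //=; by move=> d [Hr _ _ _] _. Qed.

Lemma left_nil_cancel (S : monoidType) n : left_nilpotent S n -> cancellative S.
Proof.
move=> Hn; split=> a b c E; apply/Hn.
- elim: n {Hn} => [|j IH] //= d Hd Htc.
  have := Htc (sq_mul (Sq a a 1 1) (Sq b c b c)) (M2_mul (@M2_gen1 S _ _ a 1 I) (M2_gen2 _ IH)).
  rewrite /= !mul1g E; apply; by case: Hd.
- elim: n {Hn} => [|j IH] //= d Hd Htc.
  have := Htc (sq_mul (Sq b c b c) (Sq a a 1 1)) (M2_mul (M2_gen2 _ IH) (@M2_gen1 S _ _ a 1 I)).
  rewrite /= !mulg1 E; apply; by case: Hd.
Qed.

Lemma M2_mono (S : magmaType) (a a' b b' : S -> S -> Prop) f :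
  (forall x y, a x y -> a' x y) -> (forall x y, b x y -> b' x y) ->
  M2 a b f -> M2 a' b' f.
Proof.
move=> Ha Hb; elim=> [x y /Ha|x y /Hb|g h _ IHg _ IHh].
- exact: M2_gen1. - exact: M2_gen2. - exact: M2_mul.
Qed.

Section Grp.
Variable G : groupType.

Lemma lcs1 j : @lcs G j 1.
Proof. case: j => //= j; exact: gs_one. Qed.
Lemma lcsM j x y : @lcs G j x -> @lcs G j y -> @lcs G j (x * y).
Proof. case: j => //= j; exact: gs_mul. Qed.
Lemma lcsV j x : @lcs G j x -> @lcs G j x^-1.
Proof. case: j => //= j; exact: gs_inv. Qed.
Lemma lcsJ j x g : @lcs G j x -> @lcs G j (x ^ g).
Proof.
elim: j x g => [|j IH] //= x g; elim.
- move=> z [a [b [Ha ->]]]; apply: gs_base; exists (a ^ g), (b ^ g).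
  by split; [apply: IH | rewrite conjRg].
- rewrite conj1g; exact: gs_one.
- by move=> u v _ Hu _ Hv; rewrite conjMg; apply: gs_mul.
- by move=> u _ Hu; rewrite conjVg; apply: gs_inv.
Qed.
Lemma lcsR j k g : @lcs G j k -> @lcs G j.+1 [~ k, g].
Proof. by move=> Hk; apply: gs_base; exists k, g. Qed.

Definition eqv j (a b : G) := @lcs G j (a^-1 * b).

Lemma eqv_refl j a : eqv j a a.
Proof. by rewrite /eqv mulVg; apply: lcs1. Qed.
Lemma eqv_sym j a b : eqv j a b -> eqv j b a.
Proof. by rewrite /eqv => /lcsV; rewrite invgM invgK. Qed.
Lemma eqv_trans j a b c : eqv j a b -> eqv j b c -> eqv j a c.
Proof.
rewrite /eqv => H1 H2; have := lcsM H1 H2.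
by rewrite -mulgA (mulgA b) mulgV mul1g.
Qed.
Lemma eqvM j a b c d : eqv j a b -> eqv j c d -> eqv j (a * c) (b * d).
Proof.
rewrite /eqv => H1 H2; have := lcsM (lcsJ c H1) H2.
by rewrite conjgE invgM !mulgA mulgK.
Qed.
Lemma eqv_comm j k g : @lcs G j k -> eqv j.+1 (g * k) (k * g).
Proof.
move=> /(lcsR g); rewrite /eqv /commg conjgE invgM !mulgA; by [].
Qed.
Lemma eqv_one j k : eqv j 1 k -> @lcs G j k.
Proof. by rewrite /eqv invg1 mul1g. Qed.
End Grp.

Section Emb.
Variables (S : monoidType) (G : groupType) (phi : S -> G).
Hypothesis phiM : forall x y, phi (x * y) = phi x * phi y.

Definition dl j (x y : S) := eqv j (phi x) (phi y).

Lemma dl_cong j : congruence (dl j).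
Proof.
split; rewrite /dl.
- by move=> x; apply: eqv_refl.
- by move=> x y; apply: eqv_sym.
- by move=> x y z; apply: eqv_trans.
- by move=> a b c d H1 H2; rewrite !phiM; apply: eqvM.
Qed.

Lemma key_mul j p q r s p' q' r' s' k k' :
  @lcs G j k -> eqv j.+1 (p * k) r -> eqv j.+1 (q * k) s ->
  @lcs G j k' -> eqv j.+1 (p' * k') r' -> eqv j.+1 (q' * k') s' ->
  eqv j.+1 (p * p' * (k * k')) (r * r') /\ eqv j.+1 (q * q' * (k * k')) (s * s').
Proof.
move=> Hk H1 H2 Hk' H1' H2'.
have E x y : eqv j.+1 (x * y * (k * k')) (x * k * (y * k')).
  have -> : x * y * (k * k') = x * (y * k) * k' by rewrite !mulgA.
  have -> : x * k * (y * k') = x * (k * y) * k' by rewrite !mulgA.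
  apply: eqvM; last exact: eqv_refl.
  apply: eqvM; [exact: eqv_refl | exact: eqv_comm Hk].
split; apply: eqv_trans (E _ _) _; exact: eqvM.
Qed.

Lemma tc_right j : term_cond (dl j) (@total_cong S) (dl j.+1).
Proof.
move=> f Hf.
have [k [Hk H1 H2]] : exists k, [/\ @lcs G j k, eqv j.+1 (phi (f00 f) * k) (phi (f10 f))
                          & eqv j.+1 (phi (f01 f) * k) (phi (f11 f))].
  elim: Hf => {f} [a b Hab|a b _|f g _ [k [Hk H1 H2]] _ [k' [Hk' H1' H2']]] /=.
  - exists ((phi a)^-1 * phi b); split => //; rewrite mulgA mulgV mul1g; exact: eqv_refl.
  - exists 1; split; [exact: lcs1 | | ]; rewrite mulg1; exact: eqv_refl.
  - exists (k * k'); split; first exact: lcsM.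
    + by rewrite !phiM; case: (key_mul Hk H1 H2 Hk' H1' H2').
    + by rewrite !phiM; case: (key_mul Hk H1 H2 Hk' H1' H2').
rewrite /dl => Hpq; apply: eqv_trans (eqv_sym H1) _; apply: eqv_trans _ H2.
apply: eqvM => //; exact: eqv_refl.
Qed.

Lemma tc_left j : term_cond (@total_cong S) (dl j) (dl j.+1).
Proof.
move=> f Hf.
have [k [Hk H1 H2]] : exists k, [/\ @lcs G j k, eqv j.+1 (phi (f00 f) * k) (phi (f01 f))
                          & eqv j.+1 (phi (f10 f) * k) (phi (f11 f))].
  elim: Hf => {f} [a b _|a b Hab|f g _ [k [Hk H1 H2]] _ [k' [Hk' H1' H2']]] /=.
  - exists 1; split; [exact: lcs1 | | ]; rewrite mulg1; exact: eqv_refl.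
  - exists ((phi a)^-1 * phi b); split => //; rewrite mulgA mulgV mul1g; exact: eqv_refl.
  - exists (k * k'); split; first exact: lcsM.
    + by rewrite !phiM; case: (key_mul Hk H1 H2 Hk' H1' H2').
    + by rewrite !phiM; case: (key_mul Hk H1 H2 Hk' H1' H2').
rewrite /dl => Hpq.
have Hk1 : eqv j.+1 1 k.
  have := eqv_trans H1 (eqv_sym Hpq).
  rewrite /eqv invgM -mulgA mulVg mulg1 invg1 mul1g => /lcsV.
  by rewrite invgK.
apply: eqv_trans _ H2.
rewrite -[X in eqv _ X _]mulg1; apply: eqvM; [exact: eqv_refl | exact: Hk1].
Qed.

Lemma rser_dl j x y : @rser S j x y -> dl j x y.
Proof.
elim: j x y => [|j IH] x y /=; first by rewrite /dl /eqv.
move=> H; apply: H; first exact: dl_cong.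
move=> f Hf; apply: tc_right; exact: M2_mono IH _ Hf.
Qed.

Lemma lser_dl j x y : @lser S j x y -> dl j x y.
Proof.
elim: j x y => [|j IH] x y /=; first by rewrite /dl /eqv.
move=> H; apply: H; first exact: dl_cong.
move=> f Hf; apply: tc_left; exact: M2_mono _ IH Hf.
Qed.
End Emb.

Lemma rser_refl (S : monoidType) j (x : S) : rser j x x.
Proof. case: j => [|j] //=; by move=> d [Hr _ _ _] _. Qed.

Lemma emb_nil (S : monoidType) n :
  embeds_in_nilpotent_group S n -> left_nilpotent S n /\ right_nilpotent S n.
Proof.
move=> [G [phi [Hinj HM H1 Hn]]].
have fin x y : dl phi n x y -> x = y.
  rewrite /dl /eqv => /Hn /(congr1 (mul (phi x))).
  by rewrite mulg1 mulgA mulgV mul1g => /Hinj.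
split=> x y; split.
- by move/(lser_dl HM)/fin.
- by move=> ->; apply: lser_refl.
- by move/(rser_dl HM)/fin.
- by move=> ->; apply: rser_refl.
Qed.


Section Frac.
Variable S : monoidType.
Hypothesis lc : forall a b c : S, a * b = a * c -> b = c.
Hypothesis rc : forall a b c : S, b * a = c * a -> b = c.
Hypothesis lore : forall a b : S, exists p q, p * a = q * b.

Definition E (r s : S * S) := exists p q : S, p * r.1 = q * s.1 /\ p * r.2 = q * s.2.
Lemma E_refl r : E r r. Proof. by exists 1, 1. Qed.
Lemma E_sym r s : E r s -> E s r. Proof. by move=> [p [q [H1 H2]]]; exists q, p. Qed.
Lemma E_trans r s t : E r s -> E s t -> E r t.
Proof.
move=> [p [q [H1 H2]]] [p' [q' [H1' H2']]].
have [m [m' Em]] := lore q p'.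
exists (m * p), (m' * q'); rewrite -!mulgA H1 H2 !mulgA Em -!mulgA H1' H2'; done.
Qed.
Lemma E_scale r p : E r (p * r.1, p * r.2). Proof. by exists p, 1; rewrite !mul1g. Qed.

Definition SP r1 r2 (t : S * S) := exists b, E r1 (t.1, b) /\ E r2 (b, t.2).
Lemma SP_ex r1 r2 : exists t, SP r1 r2 t.
Proof.
have [p [q Ep]] := lore r1.2 r2.1.
exists (p * r1.1, q * r2.2), (p * r1.2); split; first exact: E_scale.
rewrite Ep; exact: E_scale.
Qed.
Lemma SP_uniq r1 r2 r1' r2' t t' : E r1 r1' -> E r2 r2' -> SP r1 r2 t -> SP r1' r2' t' -> E t t'.
Proof.
move=> H1 H2 [b [Hb1 Hb2]] [b' [Hb1' Hb2']].
have [p [q [Ep1 Ep2]]] : E (t.1, b) (t'.1, b').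
  apply: E_trans (E_sym Hb1) _; apply: E_trans H1 Hb1'.
have [p' [q' [Ep1' Ep2']]] : E (b, t.2) (b', t'.2).
  apply: E_trans (E_sym Hb2) _; apply: E_trans H2 Hb2'.
rewrite /= in Ep1 Ep2 Ep1' Ep2'.
have [m [m' Em]] := lore p p'.
have Eq : m * q = m' * q'.
  apply: (rc (a := b')); rewrite -!mulgA -Ep2 -Ep1' !mulgA Em; done.
exists (m * p), (m * q); split; rewrite -!mulgA.
- by rewrite -Ep1.
- have -> : m * (p * t.2) = m' * (p' * t.2) by rewrite !mulgA Em.
  by rewrite Ep2' !mulgA Eq.
Qed.

Definition inhS : inhabited (S * S) := inhabits (1, 1).
Definition norm r := epsilon inhS (E r).
Lemma normP r : E r (norm r).
Proof. apply: epsilon_spec; exists r; exact: E_refl. Qed.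
Lemma E_norm r s : E r s -> norm r = norm s.
Proof.
move=> H; rewrite /norm; congr epsilon.
apply: functional_extensionality => x; apply: propositional_extensionality.
split=> H'; [exact: E_trans (E_sym H) H' | exact: E_trans H H'].
Qed.
Lemma norm_norm r : norm (norm r) = norm r.
Proof. exact/esym/E_norm/normP. Qed.
Lemma norm_E r s : norm r = norm s -> E r s.
Proof. by move=> H; apply: E_trans (normP r) _; rewrite H; apply/E_sym/normP. Qed.

Definition T := {r : S * S | norm r == r}.
HB.instance Definition _ := Choice.on T.
Definition mk r : T := exist _ (norm r) (introT eqP (norm_norm r)).
Lemma mk_eq r s : mk r = mk s <-> E r s.
Proof.
split; first by move=> /(congr1 val) /= /norm_E.
by move=> /E_norm H; apply: val_inj => /=.
Qed.
Lemma mkval (g : T) : mk (val g) = g.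
Proof. by apply: val_inj => /=; apply/eqP; exact: (valP g). Qed.

Definition tone := mk (1, 1).
Definition tinv (g : T) := mk ((val g).2, (val g).1).
Definition tmul (g h : T) := mk (epsilon inhS (SP (val g) (val h))).

Lemma E_swap r s : E r s -> E (r.2, r.1) (s.2, s.1).
Proof. by move=> [p [q [H1 H2]]]; exists p, q. Qed.

Lemma tinvE x y : tinv (mk (x, y)) = mk (y, x).
Proof. apply/mk_eq; exact: (E_swap (E_sym (normP (x, y)))). Qed.

Lemma tmulE r1 r2 t : SP r1 r2 t -> tmul (mk r1) (mk r2) = mk t.
Proof.
move=> H; apply/mk_eq.
have H0 : SP (norm r1) (norm r2) (epsilon inhS (SP (norm r1) (norm r2))).
  by apply: epsilon_spec; apply: SP_ex.
exact: SP_uniq (E_sym (normP r1)) (E_sym (normP r2)) H0 H.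
Qed.

Lemma mk_all (g : T) : exists x y, g = mk (x, y).
Proof. by exists (val g).1, (val g).2; rewrite -surjective_pairing mkval. Qed.

Lemma tmul1g : left_id tone tmul.
Proof.
move=> g; have [x [y ->]] := mk_all g; apply: tmulE; exists x; split.
- by exists x, 1; rewrite !mulg1 !mul1g.
- exact: E_refl.
Qed.
Lemma tmulg1 : right_id tone tmul.
Proof.
move=> g; have [x [y ->]] := mk_all g; apply: tmulE; exists y; split.
- exact: E_refl.
- by exists y, 1; rewrite !mulg1 !mul1g.
Qed.
Lemma tmulVg : left_inverse tone tinv tmul.
Proof.
move=> g; have [x [y ->]] := mk_all g; rewrite tinvE.
rewrite (tmulE (t := (y, y))); last by exists x; split; apply: E_refl.
by apply/mk_eq; exists 1, y; rewrite !mulg1 !mul1g.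
Qed.
Lemma tmulgV : right_inverse tone tinv tmul.
Proof.
move=> g; have [x [y ->]] := mk_all g; rewrite tinvE.
rewrite (tmulE (t := (x, x))); last by exists y; split; apply: E_refl.
by apply/mk_eq; exists 1, x; rewrite !mulg1 !mul1g.
Qed.

Lemma chainL r1 r2 r3 t12 t : SP r1 r2 t12 -> SP t12 r3 t ->
  exists a0 a1 a2 a3, [/\ E r1 (a0, a1), E r2 (a1, a2), E r3 (a2, a3) & E t (a0, a3)].
Proof.
move=> [b [Hb1 Hb2]] [b' [[p [q [Ep1 Ep2]]] Hb3]]; rewrite /= in Ep1 Ep2.
exists (p * t12.1), (p * b), (p * t12.2), (q * t.2); split.
- exact: E_trans Hb1 (E_scale _ p).
- exact: E_trans Hb2 (E_scale _ p).
- by rewrite Ep2; exact: E_trans Hb3 (E_scale _ q).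
- by rewrite Ep1; exact: E_scale.
Qed.
Lemma chainR r1 r2 r3 t23 t : SP r2 r3 t23 -> SP r1 t23 t ->
  exists a0 a1 a2 a3, [/\ E r1 (a0, a1), E r2 (a1, a2), E r3 (a2, a3) & E t (a0, a3)].
Proof.
move=> [d [Hd1 Hd2]] [c [Hc1 [p [q [Ep1 Ep2]]]]]; rewrite /= in Ep1 Ep2.
exists (q * t.1), (q * c), (p * d), (q * t.2); split.
- exact: E_trans Hc1 (E_scale _ q).
- by rewrite -Ep1; exact: E_trans Hd1 (E_scale _ p).
- by rewrite -Ep2; exact: E_trans Hd2 (E_scale _ p).
- exact: E_scale.
Qed.
Lemma chain_uniq r1 r2 r3 a0 a1 a2 a3 c0 c1 c2 c3 :
  E r1 (a0, a1) -> E r2 (a1, a2) -> E r3 (a2, a3) ->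
  E r1 (c0, c1) -> E r2 (c1, c2) -> E r3 (c2, c3) -> E (a0, a3) (c0, c3).
Proof.
move=> A1 A2 A3 C1 C2 C3.
have H : E (a0, a2) (c0, c2).
  by apply: (SP_uniq (E_refl r1) (E_refl r2)); [exists a1 | exists c1].
apply: (SP_uniq H (E_refl r3)); [exists a2 | exists c2]; split => //; exact: E_refl.
Qed.

Lemma tmulA : associative tmul.
Proof.
move=> g1 g2 g3.
have [x1 [y1 ->]] := mk_all g1; have [x2 [y2 ->]] := mk_all g2; have [x3 [y3 ->]] := mk_all g3.
have [t23 H23] := SP_ex (x2, y2) (x3, y3); have [t' H'] := SP_ex (x1, y1) t23.
have [t12 H12] := SP_ex (x1, y1) (x2, y2); have [t H] := SP_ex t12 (x3, y3).
rewrite (tmulE H23) (tmulE H') (tmulE H12) (tmulE H); apply/mk_eq.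
have [a0 [a1 [a2 [a3 [A1 A2 A3 At]]]]] := chainR H23 H'.
have [c0 [c1 [c2 [c3 [C1 C2 C3 Ct]]]]] := chainL H12 H.
apply: E_trans At _; apply: E_trans _ (E_sym Ct).
exact: chain_uniq A1 A2 A3 C1 C2 C3.
Qed.

Definition TG : groupType := HB.pack_for groupType T (isGroup.Build T tmulA tmul1g tmulg1 tmulVg tmulgV).

Definition iota (s : S) : TG := mk (1, s).
Lemma iotaM a b : iota (a * b) = iota a * iota b.
Proof.
apply/esym; apply: tmulE; exists a; split; first exact: E_refl.
by exists a, 1; rewrite !mulg1 !mul1g.
Qed.
Lemma iota1 : iota 1 = 1.
Proof. by []. Qed.
Lemma iota_inj : injective iota.
Proof.
move=> a b /mk_eq [p [q [/= H1 H2]]]; rewrite !mulg1 in H1.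
by rewrite H1 in H2; apply: lc H2.
Qed.
Lemma iota_surj (g : TG) : exists x y, g = (iota x)^-1 * iota y.
Proof.
have [x [y ->]] := mk_all g; exists x, y.
change (mk (x, y) = tmul (tinv (mk (1, x))) (mk (1, y))).
rewrite tinvE; apply/esym/tmulE; exists 1; split; exact: E_refl.
Qed.
End Frac.

Lemma comm_cong (S : magmaType) (a b : S -> S -> Prop) : congruence (comm a b).
Proof.
split.
- by move=> x d [H _ _ _].
- by move=> x y H d Hd Ht; case: (Hd) => _ Hs _ _; apply: Hs; exact: H.
- by move=> x y z H1 H2 d Hd Ht; case: (Hd) => _ _ Ht' _; apply: Ht' (H1 d Hd Ht) (H2 d Hd Ht).
- by move=> x y z w H1 H2 d Hd Ht; case: (Hd) => _ _ _ Hm; apply: Hm (H1 d Hd Ht) (H2 d Hd Ht).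
Qed.

Lemma comm_tc (S : magmaType) (a b : S -> S -> Prop) : term_cond a b (comm a b).
Proof. by move=> f Hf H d Hd Ht; apply: Ht Hf (H d Hd Ht). Qed.

Lemma rser_cong (S : monoidType) j : congruence (@rser S j).
Proof. case: j => [|j]; last exact: comm_cong. by split. Qed.

Lemma malcev (S : monoidType) j (u v z : S) :
  rser j u v -> rser j.+1 (u * z * v) (v * z * u).
Proof.
move=> H.
set f := sq_mul (sq_mul (Sq (u * z) 1 (u * z) 1) (Sq u u v v)) (Sq 1 (z * u) 1 (z * u)).
have Hf : M2 (rser j) (@total_cong S) f.
  apply: M2_mul; last exact: M2_gen2.
  apply: M2_mul; [exact: M2_gen2 | exact: M2_gen1].
have H0 : rser j.+1 (f00 f) (f01 f).
  rewrite /= !mulg1 !mul1g mulgA; case: (rser_cong S j.+1) => Hr _ _ _; exact: Hr.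
have := @comm_tc S (rser j) (@total_cong S) f Hf H0.
by rewrite /= !mulg1 !mul1g !mulgA.
Qed.

Lemma grp_swap (G : groupType) (a b c d : G) : a * b = c * d -> b * d^-1 = a^-1 * c.
Proof.
move=> H; apply: (@mulgI _ a); rewrite mulgA H -mulgA mulgV mulg1.
by rewrite mulgA mulgV mul1g.
Qed.

Lemma cRM (G : groupType) (k a b : G) : [~ k, a * b] = [~ k, b] * [~ k, a] ^ b.
Proof.
by rewrite !commgEl !conjgE !invgM !mulgA !mulgK.
Qed.

Lemma cRV (G : groupType) (k a : G) : [~ k, a^-1] = ([~ k, a] ^ a^-1)^-1.
Proof. by rewrite !commgEl !conjgE !invgK !invgM !invgK !mulgA mulgV mul1g. Qed.

Section Nil.
Variables (S : monoidType) (G : groupType) (io : S -> G).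
Hypothesis ioM : forall a b, io (a * b) = io a * io b.
Hypothesis surj : forall g, exists x y, g = (io x)^-1 * io y.
Hypothesis lore : forall a b : S, exists p q, p * a = q * b.
Hypothesis rore : forall a b : S, exists p q, a * p = b * q.

Definition M j g := exists x y, rser j x y /\ g = (io x)^-1 * io y.
Definition N j g := exists s, M j (g ^ io s).

Lemma M1 j : M j 1.
Proof. exists 1, 1; split; last by rewrite mulVg. by case: (rser_cong S j). Qed.
Lemma MV j g : M j g -> M j g^-1.
Proof.
move=> [x [y [H ->]]]; exists y, x; split; last by rewrite invgM invgK.
by case: (rser_cong S j) => _ Hs _ _; apply: Hs.
Qed.
Lemma MM j g h : M j g -> M j h -> M j (g * h).
Proof.
move=> [x [y [H ->]]] [x' [y' [H' ->]]].
have [p [q Ep]] := lore y x'.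
exists (p * x), (q * y'); split.
- case: (rser_cong S j) => Hr _ Ht Hm.
  apply: Ht (Hm _ _ _ _ (Hr p) H) _; rewrite Ep; exact: Hm _ _ _ _ (Hr q) H'.
  have Ep' : io p * io y = io q * io x' by rewrite -!ioM Ep.
  have E2 := grp_swap Ep'.
  by rewrite !ioM invgM -!mulgA (mulgA (io y)) E2 !mulgA.
Qed.
Lemma MJ j g s : M j g -> M j (g ^ io s).
Proof.
move=> [x [y [H ->]]]; exists (x * s), (y * s); split.
- by case: (rser_cong S j) => Hr _ _ Hm; apply: Hm H (Hr s).
- by rewrite conjgE !ioM invgM !mulgA.
Qed.

Lemma N1 j : N j 1.
Proof. by exists 1; rewrite conj1g; apply: M1. Qed.
Lemma NV j g : N j g -> N j g^-1.
Proof. by move=> [s Hs]; exists s; rewrite conjVg; apply: MV. Qed.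
Lemma NM j g h : N j g -> N j h -> N j (g * h).
Proof.
move=> [s1 H1] [s2 H2]; have [a [b Eab]] := rore s1 s2.
exists (s1 * a); rewrite conjMg; apply: MM.
- by rewrite ioM conjgM; apply: MJ.
- by rewrite Eab ioM conjgM; apply: MJ.
Qed.
Lemma NJs j g t : N j g -> N j (g ^ io t).
Proof.
move=> [s0 H]; have [x [y Exy]] := rore t s0.
by exists x; rewrite -conjgM -ioM Exy ioM conjgM; apply: MJ.
Qed.
Lemma NJi j g t : N j g -> N j (g ^ (io t)^-1).
Proof.
move=> [s0 H]; exists (t * s0).
by rewrite ioM -conjgM mulgA mulVg mul1g.
Qed.
Lemma NJ j g h : N j g -> N j (g ^ h).
Proof.
move=> H; have [x [y ->]] := surj h; rewrite conjgM; apply: NJs; exact: NJi.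
Qed.
Lemma MN j g : M j g -> N j g.
Proof. by move=> H; exists 1; apply: MJ. Qed.

Lemma key6 j k s : M j k -> N j.+1 [~ k, io s].
Proof.
move=> [X [Y [H ->]]].
have A z : M j.+1 [~ (io X)^-1 * io Y, io (z * X)].
  exists (X * z * Y), (Y * z * X); split; first exact: malcev.
  by rewrite !ioM !commgEl !conjgE !invgM !invgK !mulgA !mulgK.
exists X; have := MM (MV (A 1)) (A s).
by rewrite mul1g ioM cRM mulgA mulVg mul1g.
Qed.

Lemma key7a j k g : M j k -> N j.+1 [~ k, g].
Proof.
move=> H; have [a [b ->]] := surj g.
rewrite cRM cRV; apply: NM; first exact: key6.
apply: NJ; apply: NV; apply: NJ; exact: key6.
Qed.

Lemma key7 j k g : N j k -> N j.+1 [~ k, g].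
Proof.
move=> [s H].
have -> : [~ k, g] = [~ k ^ io s, g ^ io s] ^ (io s)^-1.
  by rewrite -conjRg -conjgM mulgV conjg1.
apply: NJ; exact: key7a.
Qed.

Lemma lcs_N j g : lcs j g -> N j g.
Proof.
elim: j g => [|j IH] g /=.
- move=> _; apply: MN; have [x [y ->]] := surj g; by exists x, y.
- elim=> [z [x [y [Hx ->]]]| | u v _ Hu _ Hv | u _ Hu].
  + exact/key7/IH.
  + exact: N1.
  + exact: NM.
  + exact: NV.
Qed.

Lemma nil_G n : right_nilpotent S n -> nilpotent_class_le G n.
Proof.
move=> Hn g /lcs_N [s [x [y [/Hn -> E]]]].
by move: E; rewrite mulVg => /eqP; rewrite conjg_eq1 => /eqP.
Qed.
End Nil.

Section Ore.
Variable S : monoidType.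
Fixpoint uv (a b : S) k : S * S :=
  match k with 0 => (a, b) | k'.+1 => ((uv a b k').1 * (uv a b k').2, (uv a b k').2 * (uv a b k').1) end.
Lemma uv_rser a b k : rser k (uv a b k).1 (uv a b k).2.
Proof.
elim: k => [|k IH] //=; have := malcev 1 IH; by rewrite !mulg1.
Qed.
Lemma lore_of n : right_nilpotent S n -> forall a b : S, exists p q, p * a = q * b.
Proof.
move=> Hn a b.
have H k : exists P Q, (uv a b k = (P * a, Q * b)) \/ (uv a b k = (P * b, Q * a)).
  elim: k => [|k [P [Q [E|E]]]] /=; first by exists 1, 1; left; rewrite !mul1g.
  - by exists ((uv a b k).1 * Q), ((uv a b k).2 * P); right; rewrite E /= !mulgA.
  - by exists ((uv a b k).1 * Q), ((uv a b k).2 * P); left; rewrite E /= !mulgA.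
have /Hn Eq := uv_rser a b n.
have [P [Q [E|E]]] := H n; rewrite E /= in Eq.
- by exists P, Q.
- by exists Q, P.
Qed.
Lemma rore_of n : right_nilpotent S n -> forall a b : S, exists p q, a * p = b * q.
Proof.
move=> Hn a b.
have H k : exists P Q, uv a b k = (a * P, b * Q).
  elim: k => [|k [P [Q E]]] /=; first by exists 1, 1; rewrite !mulg1.
  by exists (P * (uv a b k).2), (Q * (uv a b k).1); rewrite E /= !mulgA.
have /Hn Eq := uv_rser a b n.
by have [P [Q E]] := H n; rewrite E /= in Eq; exists P, Q.
Qed.
End Ore.
Lemma canc_emb (S : monoidType) n :
  cancellative S -> right_nilpotent S n -> embeds_in_nilpotent_group S n.
Proof.
move=> [lc rc] Hn.
have lo := lore_of Hn; have ro := rore_of Hn.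
exists (TG rc lo), (iota rc lo); split.
- exact: iota_inj.
- exact: iotaM.
- exact: iota1.
- apply: (nil_G (io := iota rc lo)) => //; [exact: iotaM | exact: iota_surj].
Qed.

Theorem theorem1p3 (S : monoidType) (n : nat) :
  (cancellative S /\ right_nilpotent S n <->
   left_nilpotent S n /\ right_nilpotent S n) /\
  (left_nilpotent S n /\ right_nilpotent S n <->
   embeds_in_nilpotent_group S n).
Proof.
split; split.
- by move=> [Hc Hr]; apply: emb_nil; apply: canc_emb.
- by move=> [Hl Hr]; split=> //; apply: left_nil_cancel Hl.
- by move=> [Hl Hr]; apply: canc_emb Hr; apply: left_nil_cancel Hl.
- exact: emb_nil.
Qed.
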